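(* Let $(\mathcal{X},d)$ be a finite metric space, $\mu\in\mathcal{M}_+(\mathcal{X})$ with $\mathbb{M}(\mu)>0$, $N\in\mathbb{N}$, and let $\hat\mu_N$ be the multinomial-model estimator. Then for every $p\ge1$, $C>0$, $$\mathbb{E}\big[\mathrm{KR}^p_{p,C}(\hat\mu_N,\mu)\big]\le\Big(\frac{C^p}{2}\sqrt{\mathbb{M}(\mu)}\sum_{x\in\mathcal{X}}\sqrt{\mu(x)}\Big)N^{-1/2}.$$
   Context: $\mathcal{M}_+(\mathcal{X})$ non-negative measures on finite $\mathcal{X}$, $\mathbb{M}(\mu)=\sum_x\mu(x)$. $\mathrm{KR}_{p,C}(\mu,\nu)=\big(\min_{\pi\in\Pi_\le(\mu,\nu)}\sum_{x,x'}d^p(x,x')\pi(x,x')+C^p(\frac{\mathbb{M}(\mu)+\mathbb{M}(\nu)}2-\mathbb{M}(\pi))\big)^{1/p}$ with $\Pi_\le(\mu,\nu)=\{\pi\in\mathcal{M}_+(\mathcal{X}\times\mathcal{X}):\sum_{x'}\pi(x,x')\le\mu(x),\sum_x\pi(x,x')\le\nu(x')\}$. Multinomial model: $X_1,\dots,X_N$ i.i.d. with law $\mu/\mathbb{M}(\mu)$ and $\hat\mu_N=\frac{\mathbb{M}(\mu)}{N}\sum_{x\in\mathcal{X}}|\{k:X_k=x\}|\,\delta_x$. *)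

(* Defs.v *)
From HB Require Import structures.
From mathcomp Require Import all_boot all_order all_algebra.
From mathcomp Require Import all_classical all_reals all_analysis.
Set Implicit Arguments. Unset Strict Implicit. Unset Printing Implicit Defensive.
Import Order.TTheory GRing.Theory Num.Theory.
Local Open Scope classical_set_scope.
Local Open Scope ring_scope.

Definition is_metric (R : realType) (X : finType) (d : X -> X -> R) : Prop :=
  (forall x y, 0 <= d x y) /\ (forall x y, d x y = 0 <-> x = y) /\
  (forall x y, d x y = d y x) /\ (forall x y z, d x z <= d x y + d y z).

Definition mass (R : realType) (X : finType) (mu : X -> R) : R := \sum_(x : X) mu x.

Definition subcoupling (R : realType) (X : finType) (mu nu : X -> R)
  (pi : X -> X -> R) : Prop :=
  (forall x x', 0 <= pi x x') /\
  (forall x, \sum_(x' : X) pi x x' <= mu x) /\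
  (forall x', \sum_(x : X) pi x x' <= nu x').

Definition KR_obj (R : realType) (X : finType) (d : X -> X -> R) (p C : R)
  (mu nu : X -> R) (pi : X -> X -> R) : R :=
  \sum_(x : X) \sum_(x' : X) (d x x' `^ p) * pi x x'
  + (C `^ p) * ((mass mu + mass nu) / 2 - \sum_(x : X) \sum_(x' : X) pi x x').

(* KR_{p,C}(mu,nu)^p : the minimum (= infimum, attained) of the objective *)
Definition KRp (R : realType) (X : finType) (d : X -> X -> R) (p C : R)
  (mu nu : X -> R) : R :=
  inf [set c | exists pi, subcoupling mu nu pi /\ c = KR_obj d p C mu nu pi].

Definition KR (R : realType) (X : finType) (d : X -> X -> R) (p C : R)
  (mu nu : X -> R) : R := KRp d p C mu nu `^ (p^-1).

(* multinomial-model empirical measure from a sample t : 'I_N -> X *)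
Definition emp_measure (R : realType) (X : finType) (mu : X -> R) (N : nat)
  (t : {ffun 'I_N -> X}) : X -> R :=
  fun x => mass mu / N%:R * #|[set k | t k == x]|%:R.

(* expectation over X_1..X_N i.i.d. with law mu / M(mu) *)
Definition sample_expect (R : realType) (X : finType) (mu : X -> R) (N : nat)
  (f : {ffun 'I_N -> X} -> R) : R :=
  \sum_(t : {ffun 'I_N -> X}) (\prod_(k < N) (mu (t k) / mass mu)) * f t.

(* Main.v *)
Require Import Defs.
From HB Require Import structures.
From mathcomp Require Import all_boot all_order all_algebra.
From mathcomp Require Import all_classical all_reals all_analysis.
From mathcomp Require Import ring lra.
Import Order.TTheory GRing.Theory Num.Theory.
Local Open Scope ring_scope.

Section P.
Variables (R : realType) (X : finType) (N : nat).

Lemma prodE (W : X -> R) (G : 'I_N -> X -> R) :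
  \sum_(t : {ffun 'I_N -> X}) (\prod_(k < N) W (t k)) * \prod_(k < N) G k (t k)
  = \prod_(k < N) \sum_(y : X) W y * G k y.
Proof.
rewrite bigA_distr_bigA /=; apply: eq_bigr => t _.
by rewrite -big_split.
Qed.

Lemma sum_ind_mul (f : X -> R) (x : X) :
  \sum_(y : X) f y * ((y == x)%:R) = f x.
Proof.
rewrite (bigD1 x) //= eqxx mulr1 big1 ?addr0 // => y /negbTE ->.
by rewrite mulr0.
Qed.

Lemma prod_if (k : 'I_N) (F : 'I_N -> R) :
  \prod_(i < N) (if i == k then F i else 1) = F k.
Proof. by rewrite -big_mkcond big_pred1_eq. Qed.

Lemma cs_ineq (w Y : {ffun 'I_N -> X} -> R) :
  (forall t, 0 <= w t) -> \sum_t w t = 1 ->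
  \sum_t w t * `|Y t| <= Num.sqrt (\sum_t w t * Y t ^+ 2).
Proof.
move=> w0 w1; set m := \sum_t w t * `|Y t|.
have m0 : 0 <= m by apply: sumr_ge0 => t _; rewrite mulr_ge0.
have : 0 <= \sum_t w t * (`|Y t| - m) ^+ 2.
  by apply: sumr_ge0 => t _; rewrite mulr_ge0 // sqr_ge0.
have -> : \sum_t w t * (`|Y t| - m) ^+ 2 =
   \sum_t w t * Y t ^+ 2 - 2 * m * m + m ^+ 2 * \sum_t w t.
  transitivity (\sum_t (w t * Y t ^+ 2 - 2 * m * (w t * `|Y t|) + m ^+ 2 * w t)).
    apply: eq_bigr => t _.
    rewrite -[Y t ^+ 2]real_normK ?num_real //. ring.
  by rewrite big_split /= sumrB -!mulr_sumr.
rewrite w1 mulr1 => h.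
rewrite -(ger0_norm m0) -sqrtr_sqr; apply: ler_wsqrtr; lra.
Qed.
End P.

Section P2.
Variables (R : realType) (X : finType) (N : nat) (W : X -> R) (x : X).
Hypothesis W1 : \sum_y W y = 1.
Let q := W x.
Let a y : R := (y == x)%:R - q.

Lemma sumWa : \sum_y W y * a y = 0.
Proof.
rewrite /a; under eq_bigr do rewrite mulrBr.
by rewrite sumrB sum_ind_mul -mulr_suml W1 mul1r subrr.
Qed.

Lemma sumWaa : \sum_y W y * (a y * a y) = q - q ^+ 2.
Proof.
transitivity (\sum_y ((W y * a y) * (y == x)%:R - q * (W y * a y))).
  by apply: eq_bigr => y _; rewrite /a /q; ring.
rewrite sumrB sum_ind_mul -mulr_sumr sumWa mulr0 subr0 /a eqxx /q /=. ring.
Qed.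

Lemma prodG (k l : 'I_N) :
  \sum_(t : {ffun 'I_N -> X}) (\prod_(i < N) W (t i)) * (a (t k) * a (t l))
  = \prod_(i < N) \sum_y W y * ((if i == k then a y else 1) * (if i == l then a y else 1)).
Proof.
rewrite -prodE; apply: eq_bigr => t _; congr (_ * _).
by rewrite big_split /= (prod_if R _ k (fun i => a (t i))) (prod_if R _ l (fun i => a (t i))).
Qed.

Lemma pair_expect (k l : 'I_N) :
  \sum_(t : {ffun 'I_N -> X}) (\prod_(i < N) W (t i)) * (a (t k) * a (t l))
  = if k == l then q - q ^+ 2 else 0.
Proof.
rewrite prodG; case: (eqVneq k l) => [<-|kl].
  rewrite -(prod_if R _ k (fun _ => q - q ^+ 2)); apply: eq_bigr => i _.
  case: eqP => _; first exact: sumWaa.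
  by under eq_bigr do rewrite !mulr1; rewrite W1.
rewrite (bigD1 k) //= eqxx (negbTE kl).
by under eq_bigr do rewrite !mulr1; rewrite sumWa mul0r.
Qed.
Lemma second_moment :
  \sum_(t : {ffun 'I_N -> X}) (\prod_(i < N) W (t i)) * (\sum_(k < N) a (t k)) ^+ 2
  = N%:R * (q - q ^+ 2).
Proof.
transitivity (\sum_(k < N) \sum_(l < N) \sum_(t : {ffun 'I_N -> X})
   (\prod_(i < N) W (t i)) * (a (t k) * a (t l))).
  under [RHS]eq_bigr do rewrite exchange_big /=.
  rewrite [RHS]exchange_big /=; apply: eq_bigr => t _.
  rewrite expr2 mulr_suml mulr_sumr; apply: eq_bigr => k _.
  by rewrite mulr_sumr mulr_sumr; apply: eq_bigr => l _; rewrite mulrA.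
transitivity (\sum_(k < N) (q - q ^+ 2)); last by rewrite sumr_const card_ord mulr_natl.
apply: eq_bigr => k _.
under eq_bigr do rewrite pair_expect.
by rewrite -big_mkcond /= (eq_bigl (fun l => l == k)) ?big_pred1_eq // => l; rewrite eq_sym.
Qed.
End P2.

Section P3.
Variables (R : realType) (X : finType) (d : X -> X -> R) (p C : R).
Hypotheses (hd : is_metric d) (hp : 1 <= p) (hC : 0 < C).

Lemma obj_ge0 (mu nu : X -> R) pi : subcoupling mu nu pi -> 0 <= KR_obj d p C mu nu pi.
Proof.
move=> [pi0 [pimu pinu]]; rewrite /KR_obj.
apply: addr_ge0.
  by apply: sumr_ge0 => x _; apply: sumr_ge0 => y _; rewrite mulr_ge0 ?powR_ge0.
apply: mulr_ge0; first exact: powR_ge0.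
have h1 : \sum_x \sum_y pi x y <= mass mu by apply: ler_sum => x _; exact: pimu.
have h2 : \sum_x \sum_y pi x y <= mass nu.
  by rewrite exchange_big; apply: ler_sum => x _; exact: pinu.
lra.
Qed.

Lemma minE (a b : R) : (a + b) / 2 - Num.min a b = `|a - b| / 2.
Proof.
rewrite /Num.min; case: (ltP a b) => h.
  rewrite ltr0_norm ?subr_lt0 //; lra.
rewrite ger0_norm ?subr_ge0 //; lra.
Qed.

Lemma KR_bound (mu nu : X -> R) :
  (forall x, 0 <= mu x) -> (forall x, 0 <= nu x) -> mass mu = mass nu ->
  KR d p C mu nu `^ p <= C `^ p / 2 * \sum_x `|mu x - nu x|.
Proof.
move=> mu0 nu0 mM.
set S := [set c | exists pi, subcoupling mu nu pi /\ c = KR_obj d p C mu nu pi]%classic.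
have lbS : lbound S 0 by move=> c [pi [hpi ->]]; exact: obj_ge0.
have sub0 : subcoupling mu nu (fun _ _ => 0).
  split=> //; split=> x; rewrite big1 //.
have neS : (S !=set0)%classic by exists (KR_obj d p C mu nu (fun _ _ => 0)), (fun _ _ => 0).
have K0 : 0 <= KRp d p C mu nu by apply: lb_le_inf.
have -> : KR d p C mu nu `^ p = KRp d p C mu nu.
  by rewrite /KR -powRrM mulVf ?powRr1 // gt_eqF // (lt_le_trans ltr01 hp).
pose pi x y : R := if y == x then Num.min (mu x) (nu x) else 0.
have spi : subcoupling mu nu pi.
  split; first by move=> x y; rewrite /pi; case: eqP => _ //; rewrite le_min mu0 nu0.
  split=> x.
    by rewrite /pi -big_mkcond big_pred1_eq ge_min lexx.
  rewrite /pi (eq_bigr (fun y => if y == x then Num.min (mu y) (nu y) else 0)).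
    by rewrite -big_mkcond big_pred1_eq ge_min lexx orbT.
  by move=> y _; rewrite eq_sym; case: eqP => // ->.
apply: (le_trans (ge_inf _ _)); [by exists 0 | by exists pi; split |].
rewrite /KR_obj big1 ?add0r; last first.
  move=> x _; apply: big1 => y _; rewrite /pi; case: eqP => [->|_]; last by rewrite mulr0.
  have [_ [dxx _]] := hd; rewrite (proj2 (dxx x x) erefl) powR0 ?mul0r //.
  by rewrite gt_eqF // (lt_le_trans ltr01 hp).
under eq_bigr do rewrite /pi -big_mkcond big_pred1_eq.
rewrite -mulrA; apply: ler_wpM2l; first exact: powR_ge0.
rewrite mulr_sumr /mass -big_split /= mulr_suml -sumrB.
by apply: ler_sum => x _; rewrite minE mulrC.
Qed.
End P3.

Lemma card_sum (R : realType) (X : finType) (N : nat) (t : {ffun 'I_N -> X}) (x : X) :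
  (#|[set k | t k == x]%classic|%:R : R) = \sum_(k < N) ((t k == x)%:R).
Proof.
rewrite -sum1_card natr_sum big_mkcond /=; apply: eq_bigr => k _.
case: ifP => [/set_mem /= ->//|]; case: (boolP (t k == x)) => // h /negP[]; exact: mem_set.
Qed.

Lemma mass_emp (R : realType) (X : finType) (mu : X -> R) (N : nat) (t : {ffun 'I_N -> X}) :
  (1 <= N)%N -> mass (emp_measure mu t) = mass mu.
Proof.
move=> hN; rewrite /mass /emp_measure -mulr_sumr.
under eq_bigr do rewrite card_sum.
rewrite exchange_big /=.
transitivity ((\sum_x mu x) / N%:R * \sum_(k < N) (1 : R)); last first.
  by rewrite sumr_const card_ord mulfVK // pnatr_eq0 -lt0n.
congr (_ * _); apply: eq_bigr => k _.
rewrite (eq_bigr (fun y => 1 * ((y == t k)%:R))) ?sum_ind_mul //.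
by move=> y _; rewrite mul1r eq_sym.
Qed.

Theorem lemmaA1 (R : realType) (X : finType) (d : X -> X -> R)
  (mu : X -> R) (N : nat) (p C : R) :
  is_metric d ->
  (forall x, 0 <= mu x) -> 0 < mass mu ->
  (1 <= N)%N -> 1 <= p -> 0 < C ->
  sample_expect mu (fun t : {ffun 'I_N -> X} => KR d p C (emp_measure mu t) mu `^ p)
  <= (C `^ p / 2 * Num.sqrt (mass mu) * \sum_(x : X) Num.sqrt (mu x))
     / Num.sqrt (N%:R).
Proof.
move=> hd mu0 M0 hN hp hC.
have N0 : (N%:R : R) != 0 by rewrite pnatr_eq0 -lt0n.
have Nge0 : (0 : R) < N%:R by rewrite ltr0n.
set M := mass mu.
have M0' : M != 0 by rewrite gt_eqF.
pose W y := mu y / M.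
have W1 : \sum_y W y = 1 by rewrite -mulr_suml divff.
pose w (t : {ffun 'I_N -> X}) := \prod_(k < N) W (t k).
have w0 t : 0 <= w t by apply: prodr_ge0 => k _; rewrite divr_ge0 // ltW.
have wsum : \sum_t w t = 1.
  transitivity (\sum_t w t * \prod_(k < N) (1 : R)).
    by apply: eq_bigr => t _; rewrite big1_eq mulr1.
  rewrite (prodE _ _ _ W (fun _ _ => 1)); apply: big1 => k _.
  by under eq_bigr do rewrite mulr1.
set c := C `^ p / 2.
have c0 : 0 <= c by rewrite divr_ge0 ?powR_ge0.
apply: (le_trans (y := \sum_t w t * (c * \sum_x `|emp_measure mu t x - mu x|))).
  apply: ler_sum => t _; apply: ler_wpM2l; first exact: w0.
  apply: KR_bound => //; last exact: mass_emp.
  by move=> x; rewrite /emp_measure mulr_ge0 // divr_ge0 // ltW.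
have -> : \sum_t w t * (c * \sum_x `|emp_measure mu t x - mu x|)
        = c * \sum_x \sum_t w t * `|emp_measure mu t x - mu x|.
  rewrite exchange_big mulr_sumr; apply: eq_bigr => t _.
  by rewrite !mulr_sumr; apply: eq_bigr => x _; ring.
have -> : (c * Num.sqrt M * \sum_x Num.sqrt (mu x)) / Num.sqrt N%:R
        = c * \sum_x (Num.sqrt M * Num.sqrt (mu x) / Num.sqrt N%:R).
  by rewrite -mulr_suml -mulr_sumr !mulrA.
apply: ler_wpM2l => //; apply: ler_sum => x _.
pose a y : R := (y == x)%:R - W x.
have Ye t : emp_measure mu t x - mu x = M / N%:R * \sum_(k < N) a (t k).
  rewrite /emp_measure card_sum /a sumrB sumr_const card_ord.
  rewrite -/M mulrBr; congr (_ - _); rewrite /W -mulr_natl; field.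
  by apply/andP.
apply: (le_trans (@cs_ineq _ _ _ w _ w0 wsum)).
have -> : \sum_t w t * (emp_measure mu t x - mu x) ^+ 2
        = (M / N%:R) ^+ 2 * (N%:R * (W x - W x ^+ 2)).
  rewrite -(second_moment _ _ N W x W1) mulr_sumr; apply: eq_bigr => t _.
  by rewrite Ye exprMn /w /a; ring.
have -> : Num.sqrt M * Num.sqrt (mu x) / Num.sqrt N%:R = Num.sqrt (M * mu x / N%:R).
  by rewrite (sqrtrM _ (mulr_ge0 (ltW M0) (mu0 x))) (sqrtrM _ (ltW M0)) sqrtrV // ltW.
apply: ler_wsqrtr.
have -> : (M / N%:R) ^+ 2 * (N%:R * (W x - W x ^+ 2)) = M * mu x / N%:R - mu x ^+ 2 / N%:R.
  by rewrite /W; field; apply/andP.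
by rewrite lerBlDr lerDl divr_ge0 ?sqr_ge0.
Qed.
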